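(* Let $v=\sum_{\alpha\in\{0,1\}^n}f_\alpha\omega_\alpha\in\mathcal P^\omega_n$ with $f_\alpha\in\mathcal P_n$. Then $v\in\Lambda^\omega_n$ if and only if for every $i=1,\dots,n-1$ and every $\alpha\in\{0,1\}^n$: $$\partial_i(f_\alpha)=\begin{cases}0 & \alpha\notin J_i,\\ f_{s_i(\alpha)} & \alpha\in J_i.\end{cases}$$
   Context: Let $\mathcal P_n=\mathbb Q[x_1,\dots,x_n]$ and $\mathcal P^\omega_n=\mathcal P_n\otimes\bigwedge[\omega_1,\dots,\omega_n]$ ($\omega_i$ odd, commuting with the $x_j$). $S_n$ acts on $\mathcal P^\omega_n$ by ring automorphisms via $s_i(x_j)=x_{s_i(j)}$, $s_i(\omega_j)=\omega_j+\delta_{ij}(x_j-x_{j+1})\omega_{j+1}$; $\Lambda^\omega_n=(\mathcal P^\omega_n)^{S_n}$. On $\mathcal P_n$, $\partial_i=(1-s_i)/(x_i-x_{i+1})$ is the usual divided difference. For $\alpha\in\{0,1\}^n$, $\omega_\alpha=\omega_1^{\alpha_1}\cdots\omega_n^{\alpha_n}$; $s_i(\alpha)$ is $\alpha$ with entries $i,i+1$ swapped; $J_i=\{\alpha:\alpha_i=0,\alpha_{i+1}=1\}$. *)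

(* Defs.v *)
From HB Require Import structures.
From mathcomp Require Import all_boot all_order all_algebra.
Set Implicit Arguments. Unset Strict Implicit. Unset Printing Implicit Defensive.
Import Order.TTheory GRing.Theory Num.Theory.
Local Open Scope ring_scope.

(* ---------- P_n = Q[x_0, ..., x_{n-1}] as iterated univariate polynomials.
   MP n.+1 = {poly MP n}; the outermost indeterminate 'X is x_n (0-based). *)
Fixpoint MP (n : nat) : idomainType :=
  match n with
  | 0 => (rat : idomainType)
  | m.+1 => ({poly MP m} : idomainType)
  end.

Fixpoint var (n j : nat) : MP n :=
  match n return MP n with
  | 0 => 0
  | m.+1 => if (j < m)%N then (var m j)%:P
            else if j == m then 'X else 0
  end.

(* s_i on P_n: swaps x_i and x_{i+1} (0-based), as a ring automorphism. *)
Fixpoint sw (n : nat) (i : nat) : MP n -> MP n :=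
  match n return MP n -> MP n with
  | 0 => id
  | m.+1 => fun p =>
     if (i.+1 < m)%N then map_poly (@sw m i) p
     else if i.+1 == m then
       (match m return MP m.+1 -> MP m.+1 with
        | 0 => id
        | k.+1 => fun q => @swapXY (MP k) q
        end) p
     else p
  end.

(* "partial_i f = h" : the divided difference (f - s_i f)/(x_i - x_{i+1})
   equals h, i.e. (x_i - x_{i+1}) * h = f - s_i f (MP n is a domain). *)
Definition ddiff_is (n i : nat) (f h : MP n) : Prop :=
  (var n i - var n i.+1) * h = f - sw i f.

(* ---------- P^omega_n = P_n (x) /\[omega_0..omega_{n-1}].
   An element is sum_A f_A omega_A, A ranging over subsets of 'I_n
   (alpha in {0,1}^n <-> its support A), omega_A the increasing product. *)
Definition PW (n : nat) := {ffun {set 'I_n} -> MP n}.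

Definition pw_add n (u v : PW n) : PW n := [ffun A => u A + v A].
Definition pw_zero n : PW n := [ffun _ => 0].

(* sign of omega_A * omega_B = sgn * omega_(A u B), A,B disjoint *)
Definition pw_sgn n (A B : {set 'I_n}) : MP n :=
  (-1) ^+ #|[set p : 'I_n * 'I_n | (p.1 \in A) && (p.2 \in B) && (p.2 < p.1)%N]|.

Definition pw_mul n (u v : PW n) : PW n :=
  [ffun C => \sum_(A : {set 'I_n}) \sum_(B : {set 'I_n})
      if (A :|: B == C) && [disjoint A & B] then pw_sgn A B * u A * v B else 0].

Definition pw_const n (f : MP n) : PW n := [ffun A => if A == set0 then f else 0].
Definition pw_one n : PW n := pw_const 1.

(* the generator omega_k (0-based k; zero if k >= n, never used then) *)
Definition omega n (k : nat) : PW n :=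
  [ffun A => if (k < n)%N && (A == [set x : 'I_n | val x == k]) then 1 else 0].

Definition s_omega n (i j : nat) : PW n :=
  if j == i then pw_add (omega n j)
                        (pw_mul (pw_const (var n i - var n i.+1)) (omega n i.+1))
  else omega n j.

(* s_i on P^omega_n: the ring automorphism extending the above:
   s_i(sum_A f_A omega_A) = sum_A s_i(f_A) * prod_{j in A, increasing} s_i(omega_j) *)
Definition s_act n (i : nat) (v : PW n) : PW n :=
  \big[@pw_add n/pw_zero n]_(A : {set 'I_n})
     pw_mul (pw_const (sw i (v A)))
            (\big[@pw_mul n/pw_one n]_(j < n) (if j \in A then s_omega n i j else pw_one n)).

(* Lambda^omega_n: invariants of S_n, i.e. fixed by every generator s_i,
   i = 0, ..., n-2 (0-based) *)
Definition lambda_inv n (v : PW n) : Prop :=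
  forall i : nat, (i.+1 < n)%N -> s_act i v = v.

Definition swn (i k : nat) : nat := if k == i then i.+1 else if k == i.+1 then i else k.
Definition s_set n (i : nat) (A : {set 'I_n}) : {set 'I_n} :=
  [set x : 'I_n | [exists y in A, val x == swn i (val y)]].

Definition inJ n (i : nat) (A : {set 'I_n}) : bool :=
  ~~ [exists x in A, val x == i] && [exists x in A, val x == i.+1].

(* Main.v *)
Require Import Defs.
From HB Require Import structures.
From mathcomp Require Import all_boot all_order all_algebra.
From mathcomp Require Import zify.
Set Implicit Arguments. Unset Strict Implicit. Unset Printing Implicit Defensive.
Import Order.TTheory GRing.Theory Num.Theory.
Local Open Scope ring_scope.

Definition mono (n : nat) (C : {set 'I_n}) (a : MP n) : PW n :=
  [ffun A => if A == C then a else 0].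

Lemma monoE n (C : {set 'I_n}) a E : mono C a E = if E == C then a else 0.
Proof. by rewrite ffunE. Qed.

Lemma mono0 n (C D : {set 'I_n}) : mono C 0 = mono D 0.
Proof. by apply/ffunP=> E; rewrite !ffunE !if_same. Qed.

Lemma pw_mul_mono n (C D : {set 'I_n}) a b :
  pw_mul (mono C a) (mono D b) =
  mono (C :|: D) (if [disjoint C & D] then pw_sgn C D * a * b else 0).
Proof.
apply/ffunP=> E; rewrite !ffunE (bigD1 C) //=.
rewrite [X in _ + X](_ : _ = 0) ?addr0; last first.
  apply: big1 => A hA; apply: big1 => B _.
  by rewrite !ffunE (negbTE hA) mulr0 mul0r if_same.
rewrite (bigD1 D) //= [X in _ + X](_ : _ = 0) ?addr0; last first.
  by apply: big1 => B hB; rewrite !ffunE (negbTE hB) mulr0 if_same.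
rewrite !ffunE !eqxx (eq_sym E).
by case: (C :|: D == E); case: [disjoint C & D].
Qed.

Lemma pw_mulDl n (u u' w : PW n) :
  pw_mul (pw_add u u') w = pw_add (pw_mul u w) (pw_mul u' w).
Proof.
apply/ffunP=> E; rewrite !ffunE -big_split /=; apply: eq_bigr => A _.
rewrite -big_split /=; apply: eq_bigr => B _; rewrite ffunE.
by case: ifP; rewrite ?addr0 // mulrDr mulrDl.
Qed.

Lemma pw_mulDr n (u w w' : PW n) :
  pw_mul u (pw_add w w') = pw_add (pw_mul u w) (pw_mul u w').
Proof.
apply/ffunP=> E; rewrite !ffunE -big_split /=; apply: eq_bigr => A _.
rewrite -big_split /=; apply: eq_bigr => B _; rewrite ffunE.
by case: ifP; rewrite ?addr0 // mulrDr.
Qed.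

Lemma sgn1 n (C D : {set 'I_n}) :
  (forall x y : 'I_n, x \in C -> y \in D -> (val y < val x)%N -> False) -> pw_sgn C D = 1.
Proof.
move=> H; rewrite /pw_sgn.
have -> : [set p : 'I_n * 'I_n | (p.1 \in C) && (p.2 \in D) && (p.2 < p.1)%N] = set0.
  apply/setP => -[x y]; rewrite !inE /=; apply/negP => /andP[/andP[hx hy] hlt].
  exact: H hx hy hlt.
by rewrite cards0 expr0.
Qed.

Lemma disjN n (C D : {set 'I_n}) :
  (forall x : 'I_n, x \in C -> x \in D -> False) -> [disjoint C & D].
Proof.
move=> H; rewrite -setI_eq0; apply/eqP/setP => x; rewrite !inE.
by apply/negP => /andP[h1 h2]; exact: H h1 h2.
Qed.

Lemma disjF n (C D : {set 'I_n}) (x : 'I_n) :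
  x \in C -> x \in D -> [disjoint C & D] = false.
Proof.
move=> h1 h2; rewrite -setI_eq0; apply/negbTE/eqP => /setP /(_ x).
by rewrite !inE h1 h2.
Qed.

Lemma mul_mono_0l n (D : {set 'I_n}) a b :
  pw_mul (mono set0 a) (mono D b) = mono D (a * b).
Proof.
rewrite pw_mul_mono set0U.
have -> : [disjoint set0 & D] by apply: disjN => x; rewrite inE.
by rewrite sgn1 ?mul1r // => x y; rewrite inE.
Qed.

Lemma pw_add_mono0 n (u : PW n) C : pw_add u (mono C 0) = u.
Proof. by apply/ffunP=> E; rewrite !ffunE if_same addr0. Qed.

Definition nin n (A : {set 'I_n}) (j : nat) := [exists x in A, val x == j].

Lemma ninP n (A : {set 'I_n}) (x : 'I_n) : nin A (val x) = (x \in A).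
Proof.
apply/existsP/idP => [[y /andP[hy /eqP/val_inj e]] | hx]; first by rewrite -e.
by exists x; rewrite hx eqxx.
Qed.

Lemma nin_ge n (A : {set 'I_n}) j : (n <= j)%N -> nin A j = false.
Proof.
move=> hj; apply/negbTE/existsP => -[y /andP[_ /eqP hy]].
move: (ltn_ord y); rewrite -[nat_of_ord y]/(val y) hy; lia.
Qed.

Lemma setN n (A B : {set 'I_n}) : (forall j, nin A j = nin B j) -> A = B.
Proof. by move=> H; apply/setP => x; rewrite -!ninP. Qed.

Lemma ninX n (A : {set 'I_n}) (P : 'I_n -> bool) (Q : nat -> bool) :
  (forall x : 'I_n, P x = Q (val x)) -> forall j, (j < n)%N -> nin [set x | P x] j = Q j.
Proof.
by move=> H j hj; have -> : j = val (Ordinal hj) by []; rewrite ninP inE H.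
Qed.

Lemma nin0 n j : nin (set0 : {set 'I_n}) j = false.
Proof. case: (ltnP j n) => hj; last exact: nin_ge.
by have -> : j = val (Ordinal hj) by []; rewrite ninP inE. Qed.

Lemma ninU n (A B : {set 'I_n}) j : nin (A :|: B) j = nin A j || nin B j.
Proof. case: (ltnP j n) => hj; last by rewrite !nin_ge.
by have -> : j = val (Ordinal hj) by []; rewrite !ninP inE. Qed.

Lemma ninS n k j : nin [set x : 'I_n | val x == k] j = (j == k) && (j < n)%N.
Proof. case: (ltnP j n) => hj; last by rewrite !nin_ge // andbF.
have -> : j = val (Ordinal hj) by []. by rewrite !ninP inE andbT. Qed.

Lemma ninA n (A : {set 'I_n}) k j : nin [set x in A | (k <= val x)%N] j = nin A j && (k <= j)%N.
Proof. case: (ltnP j n) => hj; last by rewrite !nin_ge.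
by have -> : j = val (Ordinal hj) by []; rewrite !ninP inE. Qed.

Lemma swnK i k : swn i (swn i k) = k.
Proof. rewrite /swn; repeat case: ifP; lia. Qed.

Lemma swn_ge i k : (i.+1 < k)%N -> swn i k = k.
Proof. rewrite /swn; repeat case: ifP; lia. Qed.

Lemma ninsw n i (A : {set 'I_n}) j : (i.+1 < n)%N -> nin (s_set i A) j = nin A (swn i j).
Proof.
move=> hi; case: (ltnP j n) => hj; last first.
  by rewrite !nin_ge // swn_ge //; lia.
have -> : j = val (Ordinal hj) by []; rewrite ninP inE.
apply/existsP/existsP => -[y /andP[hy /eqP e]]; exists y; rewrite hy /=.
  by move: e => /= ->; rewrite swnK.
by rewrite e swnK.
Qed.

Lemma sw_i i : swn i i = i.+1. Proof. by rewrite /swn eqxx. Qed.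
Lemma sw_i1 i : swn i i.+1 = i.
Proof. by rewrite /swn (gtn_eqF (ltnSn i)) eqxx. Qed.
Lemma sw_o i j : j != i -> j != i.+1 -> swn i j = j.
Proof. by move=> h1 h2; rewrite /swn (negbTE h1) (negbTE h2). Qed.

Definition Gf n i (A : {set 'I_n}) j : PW n := if nin A j then s_omega n i j else pw_one n.
Definition Ak n (A : {set 'I_n}) k := [set x in A | (k <= val x)%N].
Definition cnd n i (A : {set 'I_n}) := nin A i && ~~ nin A i.+1.
Definition cc n i : MP n := var n i - var n i.+1.

Lemma ninAk n (A : {set 'I_n}) k j : nin (Ak A k) j = nin A j && (k <= j)%N.
Proof. exact: ninA. Qed.

Lemma omegaE n k : (k < n)%N -> omega n k = mono [set x : 'I_n | val x == k] 1.
Proof. by move=> hk; apply/ffunP => E; rewrite !ffunE hk. Qed.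
Lemma pw_oneE n : pw_one n = mono set0 1. Proof. by []. Qed.
Lemma pw_constE n (f : MP n) : pw_const f = mono set0 f. Proof. by []. Qed.

Lemma Qlem n i (A : {set 'I_n}) (hi : (i.+1 < n)%N) k : (k <= n)%N ->
  \big[@pw_mul n/pw_one n]_(k <= j < n) Gf i A j =
  pw_add (mono (Ak A k) 1)
         (mono (s_set i (Ak A k)) (if cnd i A && (k <= i)%N then cc n i else 0)).
Proof.
move=> hk; have [d hd] : exists d, (n - k)%N = d by eexists.
elim: d k hk hd => [|d IH] k hk hd.
  have hkn : k = n by lia.
  subst k; rewrite big_geq // pw_oneE.
  have -> : Ak A n = set0.
    apply: setN => j; rewrite ninAk nin0; case: (ltnP j n) => h.
      by rewrite andbF.
    by rewrite nin_ge.
  by rewrite leqNgt (ltnW hi) andbF pw_add_mono0.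
have hkn : (k < n)%N by lia.
rewrite big_ltn // IH; [|lia|lia].
rewrite {1}/Gf; case hA: (nin A k).
- have [ek|nki] := eqVneq k i.
  + move: hA hkn hd; rewrite ek => hA hkn hd.
    rewrite /s_omega eqxx omegaE // omegaE // pw_constE mul_mono_0l mulr1.
    have -> : cnd i A && (i.+1 <= i)%N = false by rewrite ltnn andbF.
    rewrite pw_add_mono0 pw_mulDl !pw_mul_mono.
    have -> : [disjoint [set x : 'I_n | val x == i] & Ak A i.+1].
      by apply: disjN => x; rewrite -!ninP ninS ninAk; lia.
    rewrite sgn1 ?mulr1; last by move=> x y; rewrite -!ninP ninS ninAk; lia.
    have -> : [set x : 'I_n | val x == i] :|: Ak A i.+1 = Ak A i.
      apply: setN => j; rewrite ninU ninS !ninAk.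
      case: (eqVneq j i) => [->|h1]; first by rewrite hA; lia.
      lia.
    rewrite /cnd hA leqnn andbT /=.
    case h1: (nin A i.+1) => /=.
      rewrite (@disjF _ _ _ (Ordinal hi)); last by rewrite -ninP ninAk h1 leqnn.
        by rewrite !pw_add_mono0.
      by rewrite -ninP ninS /= eqxx hi.
    have -> : [disjoint [set x : 'I_n | val x == i.+1] & Ak A i.+1].
      by apply: disjN => x; rewrite -!ninP ninS ninAk => /andP[/eqP e _]; rewrite e h1.
    rewrite sgn1 ?mulr1; last by move=> x y; rewrite -!ninP ninS ninAk; lia.
    congr pw_add; congr mono; last by rewrite mul1r.
    apply: setN => j; rewrite ninU ninS ninAk ninsw // ninAk.
    case: (eqVneq j i) => [->|e1]; first by rewrite sw_i h1; lia.
    case: (eqVneq j i.+1) => [->|e2]; first by rewrite sw_i1 hA; lia.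
    by rewrite sw_o //; lia.
  + rewrite /s_omega (negbTE nki) omegaE // pw_mulDr !pw_mul_mono.
    have -> : [disjoint [set x : 'I_n | val x == k] & Ak A k.+1].
      by apply: disjN => x; rewrite -!ninP ninS ninAk; lia.
    rewrite sgn1 ?mul1r; last by move=> x y; rewrite -!ninP ninS ninAk; lia.
    have -> : [set x : 'I_n | val x == k] :|: Ak A k.+1 = Ak A k.
      apply: setN => j; rewrite ninU ninS !ninAk.
      case: (eqVneq j k) => [->|h1]; first by rewrite hA; lia.
      lia.
    have -> : (k <= i)%N = (k.+1 <= i)%N by lia.
    case hc: (cnd i A && (k.+1 <= i)%N); last by rewrite mulr0 if_same !pw_add_mono0.
    move: hc => /andP[hc hki].
    have -> : [disjoint [set x : 'I_n | val x == k] & s_set i (Ak A k.+1)].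
      apply: disjN => x; rewrite -!ninP ninS ninsw // ninAk.
      case/andP=> /eqP e _; rewrite e sw_o; lia.
    rewrite sgn1 ?mul1r; last first.
      move=> x y; rewrite -!ninP ninS ninsw // ninAk => /andP[/eqP ex _].
      case: (eqVneq (val y) i) => [->|e1]; first by rewrite sw_i; lia.
      case: (eqVneq (val y) i.+1) => [->|e2]; first by rewrite sw_i1; lia.
      by rewrite sw_o //; lia.
    congr pw_add; congr mono.
    apply: setN => j; rewrite ninU ninS !ninsw // !ninAk.
    case: (eqVneq j k) => [->|h1]; first by rewrite sw_o ?hA; lia.
    case: (eqVneq j i) => [->|e1]; first by rewrite sw_i; lia.
    case: (eqVneq j i.+1) => [->|e2]; first by rewrite sw_i1; lia.
    by rewrite sw_o //; lia.
- rewrite pw_oneE pw_mulDr !mul_mono_0l !mul1r.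
  have -> : Ak A k.+1 = Ak A k.
    apply: setN => j; rewrite !ninAk.
    case: (eqVneq j k) => [->|h1]; first by rewrite hA.
    lia.
  have -> : cnd i A && (k <= i)%N = cnd i A && (k.+1 <= i)%N.
    have [ek|nki] := eqVneq k i; last by lia.
    by rewrite /cnd -ek hA.
  by [].
Qed.

Lemma big_addE n (F : {set 'I_n} -> PW n) B :
  (\big[@pw_add n/pw_zero n]_(A : {set 'I_n}) F A) B = \sum_(A : {set 'I_n}) F A B.
Proof.
apply: (big_rec2 (fun (x : PW n) (y : MP n) => x B = y)); first by rewrite ffunE.
by move=> A x y _ <-; rewrite ffunE.
Qed.

Lemma PA n i (A : {set 'I_n}) (hi : (i.+1 < n)%N) :
  \big[@pw_mul n/pw_one n]_(j < n) (if j \in A then s_omega n i j else pw_one n) =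
  pw_add (mono A 1) (mono (s_set i A) (if cnd i A then cc n i else 0)).
Proof.
rewrite (eq_bigr (fun j : 'I_n => Gf i A j)) => [|j _]; last by rewrite /Gf ninP.
rewrite -(big_mkord xpredT (Gf i A)) Qlem // andbT.
by have -> : Ak A 0 = A by apply: setN => j; rewrite ninAk andbT.
Qed.

Lemma sKK n i (A : {set 'I_n}) : (i.+1 < n)%N -> s_set i (s_set i A) = A.
Proof. by move=> hi; apply: setN => j; rewrite !ninsw // swnK. Qed.

Lemma inJ_s n i (B : {set 'I_n}) : (i.+1 < n)%N -> inJ i B -> inJ i (s_set i B) = false.
Proof.
move=> hi /andP[_ h]; rewrite /inJ.
change (~~ nin (s_set i B) i && nin (s_set i B) i.+1 = false).
have h' : nin B i.+1 := h.
by rewrite !ninsw // sw_i h'.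
Qed.

Lemma SA n i (v : PW n) (hi : (i.+1 < n)%N) B :
  s_act i v B = sw i (v B) + (if inJ i B then sw i (v (s_set i B)) * cc n i else 0).
Proof.
rewrite /s_act big_addE.
rewrite (eq_bigr (fun A => (if B == A then sw i (v A) else 0) +
   (if B == s_set i A then sw i (v A) * (if cnd i A then cc n i else 0) else 0)))
   => [|A _]; last first.
  by rewrite PA // pw_constE pw_mulDr !mul_mono_0l !ffunE mulr1.
rewrite big_split /=.
have -> : \sum_(A : {set 'I_n}) (if B == A then sw i (v A) else 0) = sw i (v B).
  rewrite (bigD1 B) //= eqxx (eq_bigr (fun _ => 0)) ?big1_eq ?addr0 // => A hA.
  by rewrite eq_sym (negbTE hA).
congr (_ + _).
rewrite (bigD1 (s_set i B)) //= sKK // eqxx (eq_bigr (fun _ => 0)) ?big1_eq ?addr0; last first.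
  by move=> A hA; case: eqP => // e; rewrite e sKK // eqxx in hA.
have -> : cnd i (s_set i B) = inJ i B.
  rewrite /cnd !ninsw // sw_i sw_i1 /inJ.
  by rewrite andbC.
by case: (inJ i B); rewrite ?mulr0.
Qed.

Theorem proposition3p2 (n : nat) (v : PW n) :
  lambda_inv v <->
  (forall i : nat, (i.+1 < n)%N -> forall A : {set 'I_n},
     ddiff_is i (v A) (if inJ i A then v (s_set i A) else 0)).
Proof.
split.
  move=> H i hi B; have e := H i hi.
  have eB := congr1 (fun f : PW n => f B) e; rewrite /= SA // in eB.
  rewrite /ddiff_is -/(cc n i).
  case hJ: (inJ i B) in eB *.
    have eS := congr1 (fun f : PW n => f (s_set i B)) e; rewrite /= SA // in eS.
    rewrite (inJ_s hi hJ) addr0 in eS.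
    rewrite eS in eB; rewrite -{1}eB.
    by rewrite addrAC subrr add0r mulrC.
  by rewrite /= addr0 in eB; rewrite -{1}eB subrr mulr0.
move=> H i hi; apply/ffunP => B; rewrite SA //.
have hB := H i hi B; rewrite /ddiff_is -/(cc n i) in hB.
case hJ: (inJ i B) in hB *; last first.
  by move: hB; rewrite mulr0 addr0 => /eqP; rewrite eq_sym subr_eq0 => /eqP.
have hS := H i hi (s_set i B); rewrite /ddiff_is (inJ_s hi hJ) mulr0 in hS.
move/eqP: hS; rewrite eq_sym subr_eq0 => /eqP <-.
by rewrite /= mulrC hB addrC subrK.
Qed.
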